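(* Let $\mathcal{Q}$ be a small involutive quantaloid and $\mathbb{A}$ a $\mathcal{Q}$-category. The following are equivalent: (1) the functor $L_{\mathbb{A}}\colon(\mathbb{A}_{\mathsf s})_{\mathsf{sc}}\to(\mathbb{A}_{\mathsf{cc}})_{\mathsf s}$, $\phi\mapsto\mathbb{A}(-,S_{\mathbb{A}}-)\otimes\phi$, is surjective on objects; (2) for every $X\in\mathcal{Q}_0$ and every left adjoint presheaf $\psi\colon *_X\to\mathbb{A}$, the presheaf $\psi_{\mathsf s}\colon *_X\to\mathbb{A}_{\mathsf s}$ is a symmetric left adjoint; (3) for every $\mathcal{Q}$-category $\mathbb{X}$ and every left adjoint distributor $\Psi\colon\mathbb{X}\to\mathbb{A}$, the distributor $\Psi_{\mathsf s}\colon\mathbb{X}_{\mathsf s}\to\mathbb{A}_{\mathsf s}$ is a symmetric left adjoint. Moreover, when (1) holds, $L_{\mathbb{A}}$ is an isomorphism with inverse $\psi\mapsto\psi_{\mathsf s}$.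
   Context: A quantaloid is a category enriched in $\mathsf{Sup}$; an involution is an identity-on-objects, direction-reversing, monotone map $f\mapsto f^{\mathsf o}$ on morphisms with $(g\circ f)^{\mathsf o}=f^{\mathsf o}\circ g^{\mathsf o}$, $f^{\mathsf{oo}}=f$. A $\mathcal{Q}$-category $\mathbb{A}$: objects with types $tx\in\mathcal{Q}_0$, homs $\mathbb{A}(y,x)\colon tx\to ty$ with $\mathbb{A}(z,y)\circ\mathbb{A}(y,x)\le\mathbb{A}(z,x)$, $1_{tx}\le\mathbb{A}(x,x)$; symmetric if $\mathbb{A}(x,y)=\mathbb{A}(y,x)^{\mathsf o}$. Symmetrisation $\mathbb{A}_{\mathsf s}$: same objects, $\mathbb{A}_{\mathsf s}(y,x)=\mathbb{A}(y,x)\wedge\mathbb{A}(x,y)^{\mathsf o}$; $S_{\mathbb{A}}\colon\mathbb{A}_{\mathsf s}\to\mathbb{A}$ is the identity on objects. Distributors $\Phi\colon\mathbb{A}\to\mathbb{B}$: arrows $\Phi(y,x)\colon tx\to ty$ with $\mathbb{B}(y',y)\circ\Phi(y,x)\le\Phi(y',x)$, $\Phi(y,x)\circ\mathbb{A}(x,x')\le\Phi(y,x')$; composition $(\Psi\otimes\Phi)(z,x)=\bigvee_y\Psi(z,y)\circ\Phi(y,x)$; left adjoint with right adjoint $\Phi^*$ if $\mathbb{A}\le\Phi^*\otimes\Phi$, $\Phi\otimes\Phi^*\le\mathbb{B}$. $\mathbb{A}(-,S_{\mathbb{A}}-)\colon\mathbb{A}_{\mathsf s}\to\mathbb{A}$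 has elements $\mathbb{A}(y,x)$. For distributors between symmetric categories, $\Phi^{\mathsf o}(x,y)=\Phi(y,x)^{\mathsf o}$, and $\Phi$ is a symmetric left adjoint if left adjoint to $\Phi^{\mathsf o}$. For a left adjoint $\Psi\colon\mathbb{X}\to\mathbb{A}$, $\Psi_{\mathsf s}\colon\mathbb{X}_{\mathsf s}\to\mathbb{A}_{\mathsf s}$ is the distributor $\Psi_{\mathsf s}(a,x)=\Psi(a,x)\wedge\Psi^*(x,a)^{\mathsf o}$ (equivalently $(\mathbb{A}(S_{\mathbb{A}}-,-)\otimes\Psi\otimes\mathbb{X}(-,S_{\mathbb{X}}-))\wedge(\mathbb{X}(S_{\mathbb{X}}-,-)\otimes\Psi^*\otimes\mathbb{A}(-,S_{\mathbb{A}}-))^{\mathsf o}$). $*_X$: one object of type $X$, hom $1_X$ (symmetric, with $( *_X)_{\mathsf s}=*_X$); a presheaf is a distributor $*_X\to\mathbb{A}$. Cauchy completion $\mathbb{A}_{\mathsf{cc}}$: objects the left adjoint presheaves $\phi\colon*_X\to\mathbb{A}$ (type $X$), hom $\mathbb{A}_{\mathsf{cc}}(\psi,\phi)$ the unique element of $\psi^*\otimes\phi$. For symmetric $\mathbb{B}$, $\mathbb{B}_{\mathsf{sc}}$ is the full subcategory of $\mathbb{B}_{\mathsf{cc}}$ on symmetric left adjoint presheaves. *)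

(* Defs.v *)
Set Implicit Arguments.

Record Quantaloid := {
  qobj : Type;
  qhom : qobj -> qobj -> Type;
  qle : forall X Y, qhom X Y -> qhom X Y -> Prop;
  qsup : forall X Y, (qhom X Y -> Prop) -> qhom X Y;
  qcomp : forall X Y Z, qhom Y Z -> qhom X Y -> qhom X Z;
  qid : forall X, qhom X X;
  qle_refl : forall X Y (f : qhom X Y), qle f f;
  qle_trans : forall X Y (f g h : qhom X Y), qle f g -> qle g h -> qle f h;
  qle_antisym : forall X Y (f g : qhom X Y), qle f g -> qle g f -> f = g;
  qsup_ub : forall X Y (S : qhom X Y -> Prop) f, S f -> qle f (qsup S);
  qsup_least : forall X Y (S : qhom X Y -> Prop) g,
      (forall f, S f -> qle f g) -> qle (qsup S) g;
  qcomp_assoc : forall X Y Z W (h : qhom Z W) (g : qhom Y Z) (f : qhom X Y),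
      qcomp h (qcomp g f) = qcomp (qcomp h g) f;
  qcomp_id_l : forall X Y (f : qhom X Y), qcomp (qid Y) f = f;
  qcomp_id_r : forall X Y (f : qhom X Y), qcomp f (qid X) = f;
  qcomp_sup_l : forall X Y Z (g : qhom Y Z) (S : qhom X Y -> Prop),
      qcomp g (qsup S) = qsup (fun h => exists f, S f /\ h = qcomp g f);
  qcomp_sup_r : forall X Y Z (S : qhom Y Z -> Prop) (f : qhom X Y),
      qcomp (qsup S) f = qsup (fun h => exists g, S g /\ h = qcomp g f)
}.

Arguments qle {_ _ _} _ _.
Arguments qsup {_ _ _} _.
Arguments qcomp {_ _ _ _} _ _.
Arguments qid {_} _.

Record InvQuantaloid := {
  iq :> Quantaloid;
  qinv : forall X Y, qhom iq X Y -> qhom iq Y X;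
  qinv_mono : forall X Y (f g : qhom iq X Y), qle f g -> qle (qinv X Y f) (qinv X Y g);
  qinv_comp : forall X Y Z (g : qhom iq Y Z) (f : qhom iq X Y),
      qinv X Z (qcomp g f) = qcomp (qinv X Y f) (qinv Y Z g);
  qinv_inv : forall X Y (f : qhom iq X Y), qinv Y X (qinv X Y f) = f
}.

Arguments qinv {_ _ _} _.

Section Defs.
Variable Q : InvQuantaloid.

Definition qmeet X Y (f g : qhom Q X Y) : qhom Q X Y :=
  qsup (fun h => qle h f /\ qle h g).
Arguments qmeet {X Y} f g.

Record QCatData := {
  ob : Type;
  ty : ob -> qobj Q;
  hm : forall (y x : ob), qhom Q (ty x) (ty y)
}.

Definition IsQCat (A : QCatData) : Prop :=
  (forall z y x, qle (qcomp (hm A z y) (hm A y x)) (hm A z x)) /\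
  (forall x, qle (qid (ty A x)) (hm A x x)).

Definition IsSymmetric (A : QCatData) : Prop :=
  forall x y, hm A x y = qinv (hm A y x).

Definition As (A : QCatData) : QCatData :=
  {| ob := ob A; ty := ty A;
     hm := fun y x => qmeet (hm A y x) (qinv (hm A x y)) |}.

Definition star (X : qobj Q) : QCatData :=
  {| ob := unit; ty := fun _ => X; hm := fun _ _ => qid X |}.

Definition dist (A B : QCatData) := forall (y : ob B) (x : ob A), qhom Q (ty A x) (ty B y).

Definition IsDist (A B : QCatData) (Phi : dist A B) : Prop :=
  (forall y' y x, qle (qcomp (hm B y' y) (Phi y x)) (Phi y' x)) /\
  (forall y x x', qle (qcomp (Phi y x) (hm A x x')) (Phi y x')).

Definition distcomp (A B C : QCatData) (Psi : dist B C) (Phi : dist A B) : dist A C :=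
  fun z x => qsup (fun h => exists y, h = qcomp (Psi z y) (Phi y x)).

Definition IsAdj (A B : QCatData) (Phi : dist A B) (R : dist B A) : Prop :=
  IsDist Phi /\ IsDist R /\
  (forall x' x, qle (hm A x' x) (distcomp R Phi x' x)) /\
  (forall y' y, qle (distcomp Phi R y' y) (hm B y' y)).

Definition IsLeftAdj (A B : QCatData) (Phi : dist A B) : Prop :=
  exists R, IsAdj Phi R.

(** The right adjoint Phi^* of a left adjoint Phi. Right adjoints are unique,
    so we take the pointwise sup over all right adjoints (which is the right
    adjoint whenever Phi is a left adjoint). *)
Definition radj (A B : QCatData) (Phi : dist A B) : dist B A :=
  fun x y => qsup (fun h => exists R, IsAdj Phi R /\ h = R x y).

Definition dop (A B : QCatData) (Phi : dist A B) : dist B A :=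
  fun x y => qinv (Phi y x).

Definition IsSymLeftAdj (A B : QCatData) (Phi : dist A B) : Prop :=
  IsAdj Phi (dop Phi).

Definition SA (A : QCatData) : dist (As A) A := fun y x => hm A y x.

Definition dist_s (X A : QCatData) (Psi : dist X A) : dist (As X) (As A) :=
  fun a x => qmeet (Psi a x) (qinv (radj Psi x a)).

(** hom of the Cauchy completion: A_cc(psi, phi) = the unique element of
    psi^* (x) phi, for phi : *_X -|-> A, psi : *_Y -|-> A. *)
Definition cchom (A : QCatData) (X Y : qobj Q)
    (psi : dist (star Y) A) (phi : dist (star X) A) : qhom Q X Y :=
  distcomp (radj psi) phi tt tt.

End Defs.

Arguments As {Q} A.
Arguments star {Q} X.
Arguments SA {Q} A.
Arguments qmeet {Q X Y} f g.

(* Main.v *)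
Require Import Defs.
From Stdlib Require Import FunctionalExtensionality.

Set Implicit Arguments. Unset Strict Implicit.
Section Basic.
Variable Q : InvQuantaloid.
Local Notation "f ≤ g" := (qle f g) (at level 70).
Local Notation "g ⊙ f" := (qcomp g f) (at level 40, left associativity).

Lemma le_refl X Y (f : qhom Q X Y) : f ≤ f.
Proof. apply qle_refl. Qed.
Lemma le_trans X Y (f g h : qhom Q X Y) : f ≤ g -> g ≤ h -> f ≤ h.
Proof. apply qle_trans. Qed.
Lemma antisym X Y (f g : qhom Q X Y) : f ≤ g -> g ≤ f -> f = g.
Proof. apply qle_antisym. Qed.
Lemma sup_ub X Y (S : qhom Q X Y -> Prop) f : S f -> f ≤ qsup S.
Proof. apply qsup_ub. Qed.
Lemma sup_least X Y (S : qhom Q X Y -> Prop) g : (forall f, S f -> f ≤ g) -> qsup S ≤ g.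
Proof. apply qsup_least. Qed.
Lemma assoc X Y Z W (h : qhom Q Z W) (g : qhom Q Y Z) (f : qhom Q X Y) :
  h ⊙ (g ⊙ f) = h ⊙ g ⊙ f.
Proof. apply qcomp_assoc. Qed.
Lemma id_l X Y (f : qhom Q X Y) : qid Y ⊙ f = f.
Proof. apply qcomp_id_l. Qed.
Lemma id_r X Y (f : qhom Q X Y) : f ⊙ qid X = f.
Proof. apply qcomp_id_r. Qed.

Lemma comp_mono_l X Y Z (g : qhom Q Y Z) (f f' : qhom Q X Y) : f ≤ f' -> g ⊙ f ≤ g ⊙ f'.
Proof.
  intro H.
  assert (E : qsup (fun h => h = f \/ h = f') = f').
  { apply antisym. apply sup_least. intros h [->| ->]; auto using le_refl.
    apply sup_ub; auto. }
  rewrite <- E, qcomp_sup_l. apply sup_ub. exists f; auto.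
Qed.
Lemma comp_mono_r X Y Z (g g' : qhom Q Y Z) (f : qhom Q X Y) : g ≤ g' -> g ⊙ f ≤ g' ⊙ f.
Proof.
  intro H.
  assert (E : qsup (fun h => h = g \/ h = g') = g').
  { apply antisym. apply sup_least. intros h [->| ->]; auto using le_refl.
    apply sup_ub; auto. }
  rewrite <- E, qcomp_sup_r. apply sup_ub. exists g; auto.
Qed.
Lemma comp_mono X Y Z (g g' : qhom Q Y Z) (f f' : qhom Q X Y) :
  g ≤ g' -> f ≤ f' -> g ⊙ f ≤ g' ⊙ f'.
Proof. intros; eapply le_trans. apply comp_mono_l; eauto. apply comp_mono_r; auto. Qed.
Lemma comp_sup_l_le X Y Z (g : qhom Q Y Z) (S : qhom Q X Y -> Prop) t :
  (forall f, S f -> g ⊙ f ≤ t) -> g ⊙ qsup S ≤ t.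
Proof. intro H. rewrite qcomp_sup_l. apply sup_least. intros h [f [Sf ->]]; auto. Qed.
Lemma comp_sup_r_le X Y Z (S : qhom Q Y Z -> Prop) (f : qhom Q X Y) t :
  (forall g, S g -> g ⊙ f ≤ t) -> qsup S ⊙ f ≤ t.
Proof. intro H. rewrite qcomp_sup_r. apply sup_least. intros h [g [Sg ->]]; auto. Qed.

Lemma inv_mono X Y (f g : qhom Q X Y) : f ≤ g -> qinv f ≤ qinv g.
Proof. apply qinv_mono. Qed.
Lemma inv_inv X Y (f : qhom Q X Y) : qinv (qinv f) = f.
Proof. apply qinv_inv. Qed.
Lemma inv_comp X Y Z (g : qhom Q Y Z) (f : qhom Q X Y) : qinv (g ⊙ f) = qinv f ⊙ qinv g.
Proof. apply qinv_comp. Qed.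
Lemma inv_le X Y (f : qhom Q X Y) g : f ≤ qinv g -> qinv f ≤ g.
Proof. intro H. rewrite <- (inv_inv g). apply inv_mono; auto. Qed.
Lemma inv_le_r X Y (f : qhom Q X Y) g : qinv f ≤ g -> f ≤ qinv g.
Proof. intro H. rewrite <- (inv_inv f). apply inv_mono; auto. Qed.
Lemma inv_id X : qinv (qid X) = qid (q:=Q) X.
Proof.
  transitivity (qinv (qid X) ⊙ qinv (qinv (qid X))).
  rewrite inv_inv, id_r; reflexivity.
  rewrite <- inv_comp, id_r, inv_inv. reflexivity.
Qed.

Lemma meet_l X Y (f g : qhom Q X Y) : qmeet f g ≤ f.
Proof. apply sup_least. intros h [H _]; auto. Qed.
Lemma meet_r X Y (f g : qhom Q X Y) : qmeet f g ≤ g.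
Proof. apply sup_least. intros h [_ H]; auto. Qed.
Lemma meet_glb X Y (f g h : qhom Q X Y) : h ≤ f -> h ≤ g -> h ≤ qmeet f g.
Proof. intros; apply sup_ub; auto. Qed.
Lemma meet_id X : qmeet (qid X) (qinv (qid X)) = qid (q:=Q) X.
Proof.
  apply antisym. apply meet_l. apply meet_glb. apply le_refl. rewrite inv_id; apply le_refl.
Qed.

Lemma dc_le (A B C : QCatData Q) (Psi : dist B C) (Phi : dist A B) z x t :
  (forall y, Psi z y ⊙ Phi y x ≤ t) -> distcomp Psi Phi z x ≤ t.
Proof. intro H. apply sup_least. intros h [y ->]; auto. Qed.
Lemma dc_ge (A B C : QCatData Q) (Psi : dist B C) (Phi : dist A B) z x y :
  Psi z y ⊙ Phi y x ≤ distcomp Psi Phi z x.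
Proof. apply sup_ub. exists y; auto. Qed.

Lemma adj_unique (A B : QCatData Q) (Phi : dist A B) R R' :
  (forall x, qid (ty A x) ≤ hm A x x) -> IsAdj Phi R -> IsAdj Phi R' ->
  forall x y, R' x y ≤ R x y.
Proof.
  intros Hr [HPhi [[HR1 HR2] [Hu Hc]]] [_ [_ [_ Hc']]] x y.
  eapply le_trans. rewrite <- (id_l (R' x y)). apply comp_mono_r. apply Hr.
  eapply le_trans. apply comp_mono_r. apply Hu.
  apply comp_sup_r_le. intros g [y' ->].
  rewrite <- assoc. eapply le_trans. apply comp_mono_l.
  eapply le_trans. apply (dc_ge Phi R' y' y x). apply Hc'. apply HR2.
Qed.

Lemma radj_eq (A B : QCatData Q) (Phi : dist A B) R :
  (forall x, qid (ty A x) ≤ hm A x x) -> IsAdj Phi R -> radj Phi = R.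
Proof.
  intros Hr H. unfold dist. apply functional_extensionality_dep; intro x.
  apply functional_extensionality_dep; intro y. apply antisym.
  - apply sup_least. intros h [R' [H' ->]]. eapply adj_unique; eauto.
  - apply sup_ub. exists R; auto.
Qed.

Lemma As_inv (C : QCatData Q) a b : qinv (hm (As C) a b) ≤ hm (As C) b a.
Proof.
  simpl. apply meet_glb. apply inv_le, meet_r. apply inv_mono, meet_l.
Qed.

Lemma dop_dist (C D : QCatData Q) (Phi : dist (As C) (As D)) :
  IsDist Phi -> IsDist (dop Phi).
Proof.
  intros [H1 H2]. split; unfold dop.
  - intros x' x y. apply inv_le_r. rewrite inv_comp, inv_inv.
    eapply le_trans. apply comp_mono_l, As_inv. apply H2.
  - intros y x x'. apply inv_le_r. rewrite inv_comp, inv_inv.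
    eapply le_trans. apply comp_mono_r, As_inv. apply H1.
Qed.

Lemma As_star X : As (star X) = star (Q:=Q) X.
Proof.
  unfold As, star; simpl. f_equal.
  apply functional_extensionality_dep; intro; apply functional_extensionality_dep; intro.
  apply meet_id.
Qed.

End Basic.
Set Implicit Arguments. Unset Strict Implicit.

Section Cat.
Variable Q : InvQuantaloid.
Local Notation "f ≤ g" := (qle f g) (at level 70).
Local Notation "g ⊙ f" := (qcomp g f) (at level 40, left associativity).
Variable A : QCatData Q.
Hypothesis HA : IsQCat A.

Lemma A_refl a : qid (ty A a) ≤ hm A a a.
Proof. exact (proj2 HA a). Qed.
Lemma A_trans z y x : hm A z y ⊙ hm A y x ≤ hm A z x.
Proof. exact (proj1 HA z y x). Qed.
Lemma star_refl (X : qobj Q) : forall x : ob (star X), qid (ty (star X) x) ≤ hm (star X) x x.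
Proof. intros; apply le_refl. Qed.

Definition Lp X (phi : dist (star X) (As A)) : dist (star X) A := distcomp (SA A) phi.
Definition SA2 : dist A (As A) := fun y x => hm A y x.
Definition Rp X (phi : dist (star X) (As A)) : dist A (star X) := distcomp (dop phi) SA2.

Section Phi.
Variable X : qobj Q.
Variable phi : dist (star X) (As A).
Hypothesis Hs : IsSymLeftAdj phi.

Lemma phi_dist b a : hm (As A) b a ⊙ phi a tt ≤ phi b tt.
Proof. destruct Hs as [[H1 _] _]. apply H1. Qed.
Lemma phi_unit : qid X ≤ distcomp (dop phi) phi tt tt.
Proof. destruct Hs as [_ [_ [Hu _]]]. apply (Hu tt tt). Qed.
Lemma phi_counit b a : phi b tt ⊙ qinv (phi a tt) ≤ hm (As A) b a.
Proof.
  destruct Hs as [_ [_ [_ Hc]]]. eapply le_trans; [|apply (Hc b a)].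
  apply (dc_ge phi (dop phi) b a tt).
Qed.
Lemma phi_le_L a : phi a tt ≤ Lp phi a tt.
Proof.
  eapply le_trans; [| apply (dc_ge (SA A) phi a tt a)].
  apply le_trans with (qid (ty A a) ⊙ phi a tt).
  rewrite id_l; apply le_refl. apply comp_mono_r, A_refl.
Qed.
Lemma phio_le_R a : qinv (phi a tt) ≤ Rp phi tt a.
Proof.
  eapply le_trans; [| apply (dc_ge (dop phi) SA2 tt a a)].
  apply le_trans with (qinv (phi a tt) ⊙ qid (ty A a)).
  rewrite id_r; apply le_refl. apply comp_mono_l, A_refl.
Qed.

Lemma L_adj : IsAdj (Lp phi) (Rp phi).
Proof.
  split; [|split; [|split]].
  - split.
    + intros y' y x. unfold Lp, distcomp at 1. apply comp_sup_l_le.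
      intros f [a ->]. rewrite assoc.
      eapply le_trans; [| apply (dc_ge (SA A) phi y' x a)].
      apply comp_mono_r, A_trans.
    + intros y x x'. destruct x, x'. change (hm (star X) tt tt) with (qid X).
      rewrite id_r; apply le_refl.
  - split.
    + intros y' y x. destruct y, y'. change (hm (star X) tt tt) with (qid X).
      rewrite id_l; apply le_refl.
    + intros y x x'. unfold Rp, distcomp at 1. apply comp_sup_r_le.
      intros f [b ->]. rewrite <- assoc.
      eapply le_trans; [| apply (dc_ge (dop phi) SA2 y x' b)].
      apply comp_mono_l, A_trans.
  - intros x' x. destruct x, x'. change (hm (star X) tt tt) with (qid X).
    eapply le_trans; [apply phi_unit|]. apply dc_le. intro a.
    eapply le_trans; [| apply (dc_ge (Rp phi) (Lp phi) tt tt a)].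
    apply comp_mono. apply phio_le_R. apply phi_le_L.
  - intros b a. apply dc_le. intro u. destruct u.
    unfold Lp, distcomp at 1. apply comp_sup_r_le. intros f [c ->].
    unfold Rp, distcomp. apply comp_sup_l_le. intros g [d ->].
    rewrite assoc. rewrite <- (assoc (SA A b c)).
    apply le_trans with (hm A b c ⊙ hm A c d ⊙ hm A d a).
    + apply comp_mono_r, comp_mono_l. eapply le_trans. apply phi_counit. apply meet_l.
    + eapply le_trans. apply comp_mono_r, A_trans. apply A_trans.
Qed.

End Phi.

Lemma ds_L X (phi : dist (star X) (As A)) : IsSymLeftAdj phi ->
  (dist_s (Lp phi) : dist (star X) (As A)) = phi.
Proof.
  intro Hs. assert (Hr : radj (Lp phi) = Rp phi) by (apply radj_eq; [apply (star_refl (X:=X))| apply L_adj; auto]).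
  destruct (L_adj Hs) as [_ [_ [_ Hc]]].
  apply functional_extensionality_dep; intro a. apply functional_extensionality_dep; intro u.
  destruct u. unfold dist_s. rewrite Hr. apply antisym.
  - set (s := qmeet (Lp phi a tt) (qinv (Rp phi tt a))).
    apply le_trans with (s ⊙ qid X). rewrite id_r; apply le_refl.
    eapply le_trans. apply comp_mono_l, (phi_unit Hs).
    unfold distcomp. apply comp_sup_l_le. intros f [b ->]. rewrite assoc.
    eapply le_trans; [| apply (phi_dist Hs a b)]. apply comp_mono_r. apply meet_glb.
    + apply le_trans with (Lp phi a tt ⊙ Rp phi tt b).
      apply comp_mono. apply meet_l. apply (phio_le_R phi).
      eapply le_trans. apply (dc_ge (Lp phi) (Rp phi) a b tt). apply Hc.
    + apply inv_le_r. rewrite inv_comp. unfold dop. rewrite inv_inv.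
      apply le_trans with (Lp phi b tt ⊙ Rp phi tt a).
      apply comp_mono. apply (phi_le_L phi). apply inv_le, meet_r.
      eapply le_trans. apply (dc_ge (Lp phi) (Rp phi) b a tt). apply Hc.
  - apply meet_glb. apply (phi_le_L phi). apply inv_le_r, (phio_le_R phi).
Qed.

Lemma L_ds X (psi : dist (star X) A) R : IsAdj psi R ->
  IsSymLeftAdj (dist_s psi : dist (star X) (As A)) ->
  forall a u, Lp (dist_s psi : dist (star X) (As A)) a u = psi a u.
Proof.
  intros Ha Hs a u. destruct u.
  assert (Hr : radj psi = R) by (apply radj_eq; [apply (star_refl (X:=X))| auto]).
  destruct Ha as [[Hp1 Hp2] [_ [_ Hc]]].
  apply antisym.
  - apply dc_le. intro b. eapply le_trans; [| apply (Hp1 a b tt)].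
    apply comp_mono_l. apply meet_l.
  - apply le_trans with (psi a tt ⊙ qid X). rewrite id_r; apply le_refl.
    eapply le_trans. apply comp_mono_l, (phi_unit Hs).
    unfold distcomp at 1. apply comp_sup_l_le. intros f [b ->]. rewrite assoc.
    eapply le_trans; [| apply (dc_ge (SA A) (dist_s psi : dist (star X) (As A)) a tt b)].
    apply comp_mono_r.
    assert (E : qinv (dist_s psi b tt) ≤ R tt b).
    { rewrite <- Hr. apply inv_le, meet_r. }
    eapply le_trans. apply comp_mono_l, E.
    eapply le_trans. apply (dc_ge psi R a b tt). apply Hc.
Qed.


Lemma dc_unfold (B C D : QCatData Q) (Psi : dist C D) (Phi : dist B C) z x :
  distcomp Psi Phi z x = qsup (fun h => exists y, h = Psi z y ⊙ Phi y x).
Proof. reflexivity. Qed.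

Lemma c2_c3 :
  (forall X (psi : dist (star X) A), IsLeftAdj psi ->
     IsSymLeftAdj (B:=As A) (dist_s psi : dist (star X) (As A))) ->
  forall (Xc : QCatData Q), IsQCat Xc ->
  forall Psi : dist Xc A, IsLeftAdj Psi -> IsSymLeftAdj (dist_s Psi).
Proof.
  intros C2 Xc HX Psi [R HR].
  assert (Hr : radj Psi = R) by (apply radj_eq; [exact (proj2 HX) | auto]).
  destruct HR as [[Hp1 Hp2] [[HR1 HR2] [Hu Hc]]].
  assert (Hcol : forall x, IsSymLeftAdj (B:=As A)
     ((fun a (_:unit) => dist_s Psi a x) : dist (star (ty Xc x)) (As A))).
  { intro x.
    pose (col := (fun a (_:unit) => Psi a x) : dist (star (ty Xc x)) A).
    pose (rcol := (fun (_:unit) a => R x a) : dist A (star (ty Xc x))).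
    assert (Ha : IsAdj col rcol).
    { split; [|split; [|split]].
      - split.
        + intros y' y u. apply Hp1.
        + intros y u u'. change (hm (star (ty Xc x)) u u') with (qid (ty Xc x)).
          unfold col. rewrite id_r; apply le_refl.
      - split.
        + intros u u' y. change (hm (star (ty Xc x)) u u') with (qid (ty Xc x)).
          unfold rcol. rewrite id_l; apply le_refl.
        + intros u y y'. apply HR2.
      - intros u u'. change (hm (star (ty Xc x)) u u') with (qid (ty Xc x)).
        eapply le_trans. apply (proj2 HX x). eapply le_trans. apply (Hu x x).
        apply (@dc_le _ _ _ _ R Psi x x). intro a. apply (dc_ge rcol col u u' a).
      - intros y' y. apply dc_le. intro u.
        eapply le_trans. apply (dc_ge Psi R y' y x). apply Hc. }
    assert (E : (dist_s col : dist (star (ty Xc x)) (As A)) = fun a _ => dist_s Psi a x).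
    { apply functional_extensionality_dep; intro a.
      apply functional_extensionality_dep; intro u.
      unfold dist_s. rewrite (radj_eq (star_refl (X:=ty Xc x)) Ha), Hr. reflexivity. }
    assert (H := C2 _ col (ex_intro _ rcol Ha)). rewrite E in H. exact H. }
  assert (SR : forall a x, qinv (dist_s Psi a x) ≤ R x a).
  { intros; rewrite <- Hr; apply inv_le, meet_r. }
  assert (HS : IsDist (dist_s Psi)).
  { split.
    + intros y' y x. apply (phi_dist (Hcol x) y' y).
    + intros y x x'. apply meet_glb.
      * eapply le_trans. apply comp_mono; apply meet_l. apply Hp2.
      * rewrite Hr. apply inv_le_r. rewrite inv_comp.
        eapply le_trans. apply comp_mono. apply inv_le, meet_r. apply SR.
        apply HR1. }
  split; [|split; [|split]].
  - exact HS.
  - apply dop_dist; exact HS.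
  - intros x' x.
    apply le_trans with (hm (As Xc) x' x ⊙ qid (ty Xc x)). rewrite id_r; apply le_refl.
    eapply le_trans. apply comp_mono_l, (phi_unit (Hcol x)).
    rewrite dc_unfold. apply comp_sup_l_le. intros f [a ->]. unfold dop. cbv beta.
    rewrite assoc.
    eapply le_trans; [| apply (dc_ge (dop (dist_s Psi)) (dist_s Psi) x' x a)].
    apply comp_mono_r. unfold dop. apply inv_le_r. rewrite inv_comp, inv_inv.
    eapply le_trans. apply comp_mono_l, As_inv. apply (proj2 HS).
  - intros y' y. apply dc_le. intro x. unfold dop.
    eapply le_trans; [|apply (phi_counit (Hcol x) y' y)]. apply le_refl.
Qed.

Lemma hom_aux X Y (phi : dist (star X) (As A)) (phi' : dist (star Y) (As A)) :
  IsSymLeftAdj phi -> IsSymLeftAdj phi' -> forall d e,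
  phi' d tt ⊙ distcomp (Rp phi') (Lp phi) tt tt ⊙ qinv (phi e tt) ≤ hm A d e.
Proof.
  intros Hs Hs' d e. destruct (L_adj Hs) as [_[_[_ Hc]]].
  destruct (L_adj Hs') as [_[_[_ Hc']]].
  rewrite dc_unfold, qcomp_sup_l. apply comp_sup_r_le. intros g [f [[a ->] ->]].
  rewrite assoc. rewrite <- (assoc (phi' d tt ⊙ Rp phi' tt a)).
  eapply le_trans; [| apply A_trans]. apply comp_mono.
  - eapply le_trans. apply comp_mono_r, (phi_le_L phi' d).
    eapply le_trans. apply (dc_ge (Lp phi') (Rp phi') d a tt). apply Hc'.
  - eapply le_trans. apply comp_mono_l, (phio_le_R phi e).
    eapply le_trans. apply (dc_ge (Lp phi) (Rp phi) a e tt). apply Hc.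
Qed.

Lemma hom X Y (phi : dist (star X) (As A)) (phi' : dist (star Y) (As A)) :
  IsSymLeftAdj phi -> IsSymLeftAdj phi' ->
  qmeet (cchom (Lp phi') (Lp phi)) (qinv (cchom (Lp phi) (Lp phi'))) = cchom phi' phi.
Proof.
  intros Hs Hs'. unfold cchom.
  rewrite (radj_eq (star_refl (X:=Y)) (L_adj Hs')), (radj_eq (star_refl (X:=X)) (L_adj Hs)),
    (radj_eq (star_refl (X:=Y)) Hs').
  set (M := distcomp (Rp phi') (Lp phi) tt tt).
  set (M' := distcomp (Rp phi) (Lp phi') tt tt).
  apply antisym.
  - set (m := qmeet M (qinv M')).
    apply le_trans with (qid Y ⊙ (m ⊙ qid X)). rewrite id_r, id_l; apply le_refl.
    eapply le_trans. apply comp_mono. apply (phi_unit Hs'). apply comp_mono_l, (phi_unit Hs).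
    rewrite (dc_unfold (dop phi') phi' tt tt), (dc_unfold (dop phi) phi tt tt).
    apply comp_sup_r_le. intros g [d ->]. rewrite qcomp_sup_l.
    apply comp_sup_l_le. intros h [f [[e ->] ->]].
    replace (dop phi' tt d ⊙ phi' d tt ⊙ (m ⊙ (dop phi tt e ⊙ phi e tt)))
      with (dop phi' tt d ⊙ ((phi' d tt ⊙ m ⊙ dop phi tt e) ⊙ phi e tt))
      by (rewrite !assoc; reflexivity).
    eapply le_trans; [| apply (dc_ge (dop phi') phi tt tt d)].
    apply comp_mono_l. eapply le_trans; [| apply (phi_dist Hs d e)].
    apply comp_mono_r. apply meet_glb.
    + eapply le_trans. apply comp_mono_r, comp_mono_l, meet_l. apply (hom_aux Hs Hs' d e).
    + apply inv_le_r. unfold dop. rewrite !inv_comp, inv_inv. rewrite assoc.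
      eapply le_trans. apply comp_mono_r, comp_mono_l, inv_le, meet_r.
      apply (hom_aux Hs' Hs e d).
  - apply meet_glb.
    + rewrite (dc_unfold (dop phi') phi). apply sup_least. intros h [a ->].
      eapply le_trans; [| apply (dc_ge (Rp phi') (Lp phi) tt tt a)].
      apply comp_mono. apply (phio_le_R phi' a). apply (phi_le_L phi a).
    + rewrite (dc_unfold (dop phi') phi). apply sup_least. intros h [a ->].
      apply inv_le_r. unfold dop. rewrite inv_comp, inv_inv.
      eapply le_trans; [| apply (dc_ge (Rp phi) (Lp phi') tt tt a)].
      apply comp_mono. apply (phio_le_R phi a). apply (phi_le_L phi' a).
Qed.

End Cat.

Theorem proposition3p6 (Q : InvQuantaloid) (A : QCatData Q) (HA : IsQCat A) :
  let L := fun (X : qobj Q) (phi : dist (star X) (As A)) =>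
             distcomp (SA A) phi in
  let C1 :=
    forall (X : qobj Q) (psi : dist (star X) A), IsLeftAdj psi ->
      exists phi : dist (star X) (As A),
        IsSymLeftAdj phi /\ (forall a u, L X phi a u = psi a u) in
  let C2 :=
    forall (X : qobj Q) (psi : dist (star X) A), IsLeftAdj psi ->
      IsSymLeftAdj (B := As A) (dist_s psi : dist (star X) (As A)) in
  let C3 :=
    forall (X : QCatData Q), IsQCat X ->
      forall Psi : dist X A, IsLeftAdj Psi -> IsSymLeftAdj (dist_s Psi) in
  (C1 <-> C2) /\ (C2 <-> C3) /\
  (C1 ->
    (forall (X : qobj Q) (phi : dist (star X) (As A)),
        IsSymLeftAdj phi -> IsLeftAdj (L X phi)) /\
    (forall (X : qobj Q) (psi : dist (star X) A), IsLeftAdj psi ->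
        IsSymLeftAdj (B := As A) (dist_s psi : dist (star X) (As A)) /\
        (forall a u, L X (dist_s psi : dist (star X) (As A)) a u = psi a u)) /\
    (forall (X : qobj Q) (phi : dist (star X) (As A)), IsSymLeftAdj phi ->
        forall a u, (dist_s (L X phi) : dist (star X) (As A)) a u = phi a u) /\
    (forall (X Y : qobj Q) (phi : dist (star X) (As A)) (phi' : dist (star Y) (As A)),
        IsSymLeftAdj phi -> IsSymLeftAdj phi' ->
        qmeet (cchom (L Y phi') (L X phi)) (qinv (cchom (L X phi) (L Y phi')))
        = cchom phi' phi)).
Proof.
  intros L C1 C2 C3.
  assert (H12 : C1 -> C2).
  { intros H1 X psi Hpsi. destruct (H1 X psi Hpsi) as [phi [Hs Heq]].
    assert (E : psi = Lp phi).
    { apply functional_extensionality_dep; intro a.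
      apply functional_extensionality_dep; intro u. symmetry; exact (Heq a u). }
    subst psi. rewrite (ds_L HA Hs). exact Hs. }
  assert (H21 : C2 -> C1).
  { intros H2 X psi Hpsi. exists (dist_s psi). split. apply H2; auto.
    destruct Hpsi as [R HR]. intros a u.
    apply (L_ds HR (H2 X psi (ex_intro _ R HR))). }
  split; [split; auto|]. split.
  - split.
    + intros H2 Xc HX Psi HPsi. exact (c2_c3 H2 HX HPsi).
    + intros H3 X psi Hpsi.
      assert (HQ : IsQCat (star X)).
      { split; intros; simpl. rewrite qcomp_id_l. apply le_refl. apply le_refl. }
      pose proof (H3 (star X) HQ psi Hpsi) as H.
      unfold IsSymLeftAdj, IsAdj, IsDist in *. cbn [hm ty As star] in H.
      rewrite (meet_id (Q:=Q) X) in H. exact H.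
  - intro H1. pose proof (H12 H1) as H2. split; [|split; [|split]].
    + intros X phi Hs. exists (Rp phi). apply (L_adj HA Hs).
    + intros X psi Hpsi. split. apply H2; auto.
      destruct Hpsi as [R HR]. intros a u.
      apply (L_ds HR (H2 X psi (ex_intro _ R HR))).
    + intros X phi Hs a u. pose proof (ds_L HA Hs) as E.
      exact (f_equal (fun f => f a u) E).
    + intros X Y phi phi' Hs Hs'. exact (hom HA Hs Hs').
Qed.
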